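(* Let $\sigma:\mathbb{Z}'\to[0,1]$ with $\sum_{l\in\mathbb{Z}',\,l<0}\sigma(l)<\infty$, and let $s\in\mathbb{Z}'$ be such that $Q^0_\sigma(s):=\prod_{i=1}^{\infty}\bigl(1-\sigma(-i-s)\bigr)>0$. Then there exist $L_*=L_*(s)>0$ and $c=c(s)>0$ such that $\|\mathsf D\|\le cL$ for $0\le L<L_*$, where $\|\mathsf D\|$ is the operator norm of $\mathsf D$ (depending on $L$).
   Context: $\mathbb{Z}'=\mathbb{Z}+\tfrac12$, $\mathbb{Z}'_+=\mathbb{Z}'\cap(0,\infty)$; $\mathrm{J}_k$ is the Bessel function of the first kind. For $L\ge0$ let $K^{\mathsf{Be}}(a,a)=\sum_{l\in\mathbb{Z}'_+}\mathrm{J}_{a+l}(2L)^2$ and $M_s(a,a)=\sigma(a-s-\tfrac12)K^{\mathsf{Be}}(a,a)$. Let $\widehat{\mathbf f}(a)=\sigma(a-s-\tfrac12)\,(\mathrm{J}_{a-\frac12}(2L),\,L\mathrm{J}_{a+\frac12}(2L))^\top$ and $\widehat{\mathbf g}(a)=\frac{1}{1-M_s(a,a)}(L\mathrm{J}_{a+\frac12}(2L),\,-\mathrm{J}_{a-\frac12}(2L))^\top$. The operator $\mathsf D$ on $\ell^2(\mathbb{Z}')\otimes\mathbb{C}^2$ is $(\mathsf D\mathbf r)(a)=\sum_{b\in\mathbb{Z}'\setminus\{a\}}\frac{\mathbf r(b)\,\widehat{\mathbf g}(b)^\top\widehat{\mathbf f}(a)}{a-b}$, $a\in\mathbb{Z}'$;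 the norm on $\ell^2(\mathbb{Z}')\otimes\mathbb{C}^2$ is induced by the standard norm on $\ell^2(\mathbb{Z}')$ and the Euclidean norm on $\mathbb{C}^2$. *)

(* Defs.v *)
From Stdlib Require Import Reals ZArith.
From Coquelicot Require Import Coquelicot.
Open Scope R_scope.

(* ---------- Coding of Z' = Z + 1/2 ----------
   An element x of Z' is coded by the integer n with x = n + 1/2.
   So a function on Z' is a function Z -> _ (its value at code n is its value
   at n + 1/2).  For a = k+1/2, b = m+1/2 we have a - b = k - m,
   a - 1/2 = k, a + 1/2 = k + 1; for l = j + 1/2 in Z'_+ (j : nat),
   a + l = k + j + 1. *)
Definition halfint (n : Z) : R := IZR n + /2.

Definition BesselJnat (n : nat) (x : R) : R :=
  Series (fun m : nat =>
    (-1) ^ m / (INR (fact m) * INR (fact (m + n))) * (x / 2) ^ (2 * m + n)).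

Definition BesselJ (n : Z) (x : R) : R :=
  match n with
  | Z0 => BesselJnat 0 x
  | Zpos p => BesselJnat (Pos.to_nat p) x
  | Zneg p => (-1) ^ (Pos.to_nat p) * BesselJnat (Pos.to_nat p) x
  end.

Definition KBe (L : R) (k : Z) : R :=
  Series (fun j : nat => (BesselJ (k + Z.of_nat j + 1) (2 * L)) ^ 2).

(* sigma(a - s - 1/2) with a = k+1/2, s = t+1/2: a - s - 1/2 = (k-t-1) + 1/2. *)
Definition sig_shift (sigma : Z -> R) (t k : Z) : R := sigma (k - t - 1)%Z.

Definition Ms (sigma : Z -> R) (t : Z) (L : R) (k : Z) : R :=
  sig_shift sigma t k * KBe L k.

Definition fhat (sigma : Z -> R) (t : Z) (L : R) (k : Z) : R * R :=
  (sig_shift sigma t k * BesselJ k (2 * L),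
   sig_shift sigma t k * (L * BesselJ (k + 1) (2 * L))).

Definition ghat (sigma : Z -> R) (t : Z) (L : R) (k : Z) : R * R :=
  (/ (1 - Ms sigma t L k) * (L * BesselJ (k + 1) (2 * L)),
   / (1 - Ms sigma t L k) * (- BesselJ k (2 * L))).

(* scalar kernel: (D r)(a) = sum_{b <> a} r(b) * (\hat g(b)^T \hat f(a)) / (a - b).
   Dker k m is the coefficient of r(b) for a = k+1/2, b = m+1/2 (0 on the diagonal). *)
Definition Dker (sigma : Z -> R) (t : Z) (L : R) (k m : Z) : R :=
  if Z.eqb k m then 0
  else (fst (ghat sigma t L m) * fst (fhat sigma t L k)
        + snd (ghat sigma t L m) * snd (fhat sigma t L k)) / IZR (k - m).

Definition sumZ (u : Z -> R) : R :=
  Series (fun n : nat => u (Z.of_nat n) + u (- Z.of_nat n - 1)%Z).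

Definition abs_summableZ (u : Z -> R) : Prop :=
  ex_series (fun n : nat => Rabs (u (Z.of_nat n)) + Rabs (u (- Z.of_nat n - 1)%Z)).

Definition vec := Z -> (C * C)%type.

Definition sqnorm_pt (v : C * C) : R := (Cmod (fst v)) ^ 2 + (Cmod (snd v)) ^ 2.

Definition in_l2 (r : vec) : Prop := abs_summableZ (fun n => sqnorm_pt (r n)).

Definition l2norm (r : vec) : R := sqrt (sumZ (fun n => sqnorm_pt (r n))).

Definition coord (i : nat) (v : C * C) : R :=
  match i with
  | 0%nat => Re (fst v) | 1%nat => Im (fst v)
  | 2%nat => Re (snd v) | _ => Im (snd v)
  end.

Definition applyK (K : Z -> Z -> R) (r : vec) (k : Z) : C * C :=
  let c i := sumZ (fun m => K k m * coord i (r m)) in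
  ((c 0%nat, c 1%nat), (c 2%nat, c 3%nat)).

(* "the operator with kernel K is a bounded operator on l^2(Z') (x) C^2 with
   operator norm <= Cst": for every r in l^2, each defining series converges
   absolutely, K r is in l^2, and ||K r|| <= Cst ||r||. *)
Definition opnorm_le (K : Z -> Z -> R) (Cst : R) : Prop :=
  forall r : vec, in_l2 r ->
    (forall (k : Z) (i : nat), (i < 4)%nat ->
        abs_summableZ (fun m => K k m * coord i (r m))) /\
    in_l2 (applyK K r) /\
    l2norm (applyK K r) <= Cst * l2norm r.

(* partial products prod_{i=1}^N (1 - sigma(-i - s)), with s = t + 1/2:
   -i - s = (-i - t - 1) + 1/2. *)
Fixpoint Q0partial (sigma : Z -> R) (t : Z) (N : nat) : R :=
  match N with
  | O => 1
  | S N' => Q0partial sigma t N' * (1 - sigma (- Z.of_nat N - t - 1)%Z)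
  end.

(* Main.v *)
Require Import Defs.
From Stdlib Require Import Reals ZArith.
From Coquelicot Require Import Coquelicot.
From Stdlib Require Import Lia Lra.
Open Scope R_scope.

Lemma pow_le_one y n : 0 <= y <= 1 -> y ^ n <= 1.
Proof. intros H; induction n; simpl. lra. assert (0 <= y^n) by (apply pow_le; lra). nra. Qed.

Lemma pow_decr y a b : 0 <= y <= 1 -> (a <= b)%nat -> y ^ b <= y ^ a.
Proof. intros H Hab. replace b with (a + (b - a))%nat by lia. rewrite pow_add.
  assert (0 <= y^a) by (apply pow_le; lra). assert (y^(b-a) <= 1) by (apply pow_le_one; lra).
  assert (0 <= y^(b-a)) by (apply pow_le; lra). nra. Qed.

Lemma INR_fact_ge1 n : 1 <= INR (fact n).
Proof. apply (le_INR 1). pose proof (lt_O_fact n). lia. Qed.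

Lemma geom_series q : 0 <= q < 1 -> ex_series (fun n => q ^ n) /\ Series (fun n => q^n) = / (1 - q).
Proof. intros H. assert (Rabs q < 1) by (rewrite Rabs_pos_eq; lra).
  split. apply ex_series_geom; auto. apply is_series_unique, is_series_geom; auto. Qed.

Lemma Series_abs_le (a b : nat -> R) : (forall n, Rabs (a n) <= b n) -> ex_series b ->
  ex_series a /\ Rabs (Series a) <= Series b.
Proof. intros H Hb.
  assert (Ha : ex_series (fun n => Rabs (a n))).
  { apply (@ex_series_le R_AbsRing R_CompleteNormedModule _ b); auto. intros n. change (norm (Rabs (a n))) with (Rabs (Rabs (a n))).
    rewrite Rabs_Rabsolu; auto. }
  split. apply ex_series_Rabs; auto.
  eapply Rle_trans. apply Series_Rabs; auto. apply Series_le; auto. intros n; split; auto. apply Rabs_pos. Qed.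

Lemma besselnat_bound n L : 0 <= L <= 1/2 -> Rabs (BesselJnat n (2*L)) <= L^n / (1 - L^2).
Proof. intros HL. unfold BesselJnat.
  destruct (geom_series (L^2)) as [G1 G2]. { split. nra. nra. }
  assert (Hb : ex_series (fun m => L^n * (L^2)^m)).
  { apply (ex_series_scal_l (L^n)) in G1. exact G1. }
  destruct (Series_abs_le (fun m => (-1) ^ m / (INR (fact m) * INR (fact (m + n))) * (2*L / 2) ^ (2 * m + n)) (fun m => L^n * (L^2)^m)) as [_ H]; auto.
  { intros m. rewrite Rabs_mult. replace (2*L/2) with L by field.
    rewrite <- RPow_abs, (Rabs_pos_eq L) by lra.
    rewrite pow_add, pow_mult.
    assert (Hf : Rabs ((-1) ^ m / (INR (fact m) * INR (fact (m + n)))) <= 1).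
    { unfold Rdiv. rewrite Rabs_mult, pow_1_abs, Rabs_inv.
      pose proof (INR_fact_ge1 m). pose proof (INR_fact_ge1 (m+n)).
      rewrite Rabs_pos_eq by nra. rewrite Rmult_1_l.
      assert (/ (INR (fact m) * INR (fact (m + n))) <= /1) by (apply Rinv_le_contravar; nra). rewrite Rinv_1 in *. lra. }
    assert (0 <= L^n) by (apply pow_le; lra). assert (0 <= (L^2)^m) by (apply pow_le; nra).
    assert (0 <= Rabs ((-1) ^ m / (INR (fact m) * INR (fact (m + n))))) by apply Rabs_pos.
    set (A := Rabs _) in *. set (P := L^n) in *. set (Q := (L^2)^m) in *.
    assert (0 <= P * Q) by (apply Rmult_le_pos; auto).
    replace (Q * P) with (P * Q) by ring. nra. }
  rewrite (Series_scal_l (L^n) (fun m => (L^2)^m)), G2 in H. exact H. Qed.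

Lemma bessel_bound k L : 0 <= L <= 1/2 -> Rabs (BesselJ k (2*L)) <= L^(Z.abs_nat k) / (1 - L^2).
Proof. intros HL. destruct k; simpl.
  - apply besselnat_bound; auto.
  - apply besselnat_bound; auto.
  - rewrite Rabs_mult, pow_1_abs, Rmult_1_l. apply besselnat_bound; auto. Qed.

Lemma finsum_geom x N : 0 <= x < 1 -> sum_f_R0 (fun j => x ^ (N - j)) N <= / (1 - x).
Proof. intros Hx. assert (Hi : 1 <= / (1 - x)).
  { assert (/1 <= /(1-x)) by (apply Rinv_le_contravar; lra). rewrite Rinv_1 in H; lra. }
  induction N.
  - simpl. lra.
  - change (sum_f_R0 (fun j => x ^ (S N - j)) (S N)) with
      (sum_f_R0 (fun j => x ^ (S N - j)) N + x ^ (S N - S N)).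
    rewrite Nat.sub_diag. simpl pow at 2.
    rewrite (sum_eq _ (fun j => x ^ (N - j) * x)).
    2:{ intros i Hi'. replace (S N - i)%nat with (S (N - i)) by lia. simpl. ring. }
    rewrite <- scal_sum.
    assert (x * sum_f_R0 (fun j => x ^ (N - j)) N <= x * / (1 - x)) by (apply Rmult_le_compat_l; lra).
    assert (x * / (1-x) + 1 = / (1-x)) by (field; lra). lra. Qed.

Lemma seriesG_pos x q : 0 <= x < 1 -> (1 <= q)%Z ->
  ex_series (fun j => x ^ (Z.abs_nat (q + Z.of_nat j))) /\
  Series (fun j => x ^ (Z.abs_nat (q + Z.of_nat j))) <= x / (1 - x).
Proof. intros Hx Hq. destruct (geom_series x Hx) as [G1 G2].
  destruct (Series_abs_le (fun j => x ^ (Z.abs_nat (q + Z.of_nat j))) (fun j => x * x ^ j)) as [E H].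
  - intros j. rewrite Rabs_pos_eq by (apply pow_le; lra). change (x * x^j) with (x ^ S j).
    apply pow_decr. lra. lia.
  - apply (ex_series_scal_l x) in G1. exact G1.
  - split; auto. rewrite (Series_scal_l x (fun j => x^j)), G2 in H.
    unfold Rdiv. pose proof (Rle_abs (Series (fun j : nat => x ^ Z.abs_nat (q + Z.of_nat j)))). lra. Qed.

Lemma seriesG_all x q : 0 <= x < 1 -> 
  ex_series (fun j => x ^ (Z.abs_nat (q + Z.of_nat j))) /\
  Series (fun j => x ^ (Z.abs_nat (q + Z.of_nat j))) <= (1 + x) / (1 - x).
Proof. intros Hx. destruct (Z_le_gt_dec 1 q) as [Hq | Hq].
  - destruct (seriesG_pos x q Hx Hq) as [E H]. split; auto.
    assert (x / (1-x) <= (1+x)/(1-x)). { unfold Rdiv. apply Rmult_le_compat_r.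
      assert (0 < /(1-x)) by (apply Rinv_0_lt_compat; lra). lra. lra. } lra.
  - set (N := Z.to_nat (- q)).
    set (a := fun j => x ^ (Z.abs_nat (q + Z.of_nat j))).
    assert (Htail : forall k, a (S N + k)%nat = x ^ Z.abs_nat (1 + Z.of_nat k)).
    { intros k. unfold a. f_equal. unfold N. lia. }
    destruct (seriesG_pos x 1 Hx) as [E1 H1]; [lia|].
    assert (Et : ex_series (fun k => a (S N + k)%nat)).
    { eapply ex_series_ext; [|exact E1]. intros k. rewrite Htail. reflexivity. }
    assert (Ea : ex_series a) by (apply (ex_series_incr_n a (S N)); exact Et).
    split; [exact Ea|].
    change (Series a <= (1 + x) / (1 - x)).
    rewrite (Series_incr_n a (S N)) by (auto; lia). simpl Init.Nat.pred.
    rewrite (Series_ext _ (fun k => x ^ Z.abs_nat (1 + Z.of_nat k))) by exact Htail.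
    rewrite (sum_eq _ (fun j => x ^ (N - j))).
    2:{ intros i Hi. unfold a. f_equal. unfold N in *. lia. }
    pose proof (finsum_geom x N Hx).
    replace ((1 + x) / (1 - x)) with (/ (1 - x) + x / (1 - x)) by (field; lra). lra. Qed.

Lemma bessel_sq_bound n L : 0 <= L <= 1/2 ->
  (BesselJ n (2*L))^2 <= / (1 - L^2)^2 * (L^2)^(Z.abs_nat n).
Proof. intros HL. pose proof (bessel_bound n L HL) as H.
  assert (Hx : 0 < 1 - L^2) by nra.
  assert (0 <= L^(Z.abs_nat n)) by (apply pow_le; lra).
  assert (Rabs (BesselJ n (2*L)) ^ 2 <= (L ^ Z.abs_nat n / (1 - L ^ 2))^2).
  { apply pow_incr. split; auto. apply Rabs_pos. }
  rewrite RPow_abs, Rabs_pos_eq in H1 by (apply pow2_ge_0).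
  eapply Rle_trans; [exact H1|]. right.
  rewrite <- pow_mult, Nat.mul_comm, pow_mult. field. lra. Qed.

Lemma KBe_bound_gen L k B : 0 <= L <= 1/2 ->
  ex_series (fun j => (L^2) ^ (Z.abs_nat (k + 1 + Z.of_nat j))) ->
  Series (fun j => (L^2) ^ (Z.abs_nat (k + 1 + Z.of_nat j))) <= B ->
  KBe L k <= / (1 - L^2)^2 * B.
Proof. intros HL E HB. unfold KBe.
  assert (Hx : 0 < 1 - L^2) by nra.
  destruct (Series_abs_le (fun j => BesselJ (k + Z.of_nat j + 1) (2 * L) ^ 2)
     (fun j => / (1 - L^2)^2 * (L^2) ^ (Z.abs_nat (k + 1 + Z.of_nat j)))) as [_ H].
  - intros j. rewrite Rabs_pos_eq by apply pow2_ge_0.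
    replace (k + 1 + Z.of_nat j)%Z with (k + Z.of_nat j + 1)%Z by ring.
    apply bessel_sq_bound; auto.
  - apply (ex_series_scal_l (/ (1 - L^2)^2)) in E. exact E.
  - rewrite (Series_scal_l (/ (1 - L^2)^2) (fun j => (L^2) ^ (Z.abs_nat (k + 1 + Z.of_nat j)))) in H.
    pose proof (Rle_abs (Series (fun j : nat => BesselJ (k + Z.of_nat j + 1) (2 * L) ^ 2))).
    assert (0 <= / (1 - L^2)^2) by (apply Rlt_le, Rinv_0_lt_compat; nra).
    assert (/ (1 - L ^ 2) ^ 2 * Series (fun j : nat => (L ^ 2) ^ Z.abs_nat (k + 1 + Z.of_nat j)) <= / (1 - L^2)^2 * B)
      by (apply Rmult_le_compat_l; auto).
    lra. Qed.

Lemma KBe_bound_all L k : 0 <= L <= 1/2 -> KBe L k <= / (1 - L^2)^2 * ((1 + L^2) / (1 - L^2)).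
Proof. intros HL. destruct (seriesG_all (L^2) (k+1)) as [E H]. nra.
  apply KBe_bound_gen; auto. Qed.

Lemma KBe_bound_pos L k : 0 <= L <= 1/2 -> (0 <= k)%Z -> KBe L k <= / (1 - L^2)^2 * (L^2 / (1 - L^2)).
Proof. intros HL Hk. destruct (seriesG_pos (L^2) (k+1)) as [E H]. nra. lia.
  apply KBe_bound_gen; auto. Qed.

Lemma Series_ge0 (a : nat -> R) : (forall n, 0 <= a n) -> ex_series a -> 0 <= Series a.
Proof. intros H E. pose proof (Series_le (fun n => 0 * a n) a) as H1.
  rewrite (Series_scal_l 0 a) in H1. rewrite Rmult_0_l in H1. apply H1; auto.
  intros n; specialize (H n); lra. Qed.

Lemma term_le_Series (a : nat -> R) N : (forall n, 0 <= a n) -> ex_series a -> a N <= Series a.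
Proof. intros H E. rewrite (Series_incr_n a (S N)) by (auto; lia). simpl Init.Nat.pred.
  assert (0 <= Series (fun k => a (S N + k)%nat)).
  { apply Series_ge0; auto. apply (ex_series_incr_n a (S N)); auto. }
  assert (a N <= sum_f_R0 a N).
  { destruct N; simpl. lra. pose proof (cond_pos_sum a N H). lra. }
  lra. Qed.

Lemma sumZ_cmp (u v : Z -> R) : (forall n, Rabs (u n) <= v n) -> abs_summableZ v ->
  abs_summableZ u /\ Rabs (sumZ u) <= sumZ v.
Proof. intros H E. unfold abs_summableZ, sumZ in *.
  assert (Hv : forall n, 0 <= v n) by (intros n; pose proof (Rabs_pos (u n)); specialize (H n); lra).
  split.
  - apply (@ex_series_le R_AbsRing R_CompleteNormedModule _ (fun n => Rabs (v (Z.of_nat n)) + Rabs (v (- Z.of_nat n - 1)%Z))); [|exact E].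
    intros n. change (norm ?x) with (Rabs x).
    rewrite Rabs_pos_eq by (pose proof (Rabs_pos (u (Z.of_nat n))); pose proof (Rabs_pos (u (- Z.of_nat n - 1)%Z)); lra).
    pose proof (Rle_abs (v (Z.of_nat n))); pose proof (Rle_abs (v (- Z.of_nat n - 1)%Z)).
    pose proof (H (Z.of_nat n)); pose proof (H (- Z.of_nat n - 1)%Z); lra.
  - destruct (Series_abs_le (fun n => u (Z.of_nat n) + u (- Z.of_nat n - 1)%Z)
       (fun n => Rabs (v (Z.of_nat n)) + Rabs (v (- Z.of_nat n - 1)%Z))) as [_ H1]; auto.
    + intros n. rewrite (Rabs_pos_eq (v (Z.of_nat n))), (Rabs_pos_eq (v (- Z.of_nat n - 1)%Z)) by auto. eapply Rle_trans. apply Rabs_triang.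
      pose proof (H (Z.of_nat n)); pose proof (H (- Z.of_nat n - 1)%Z); lra.
    + eapply Rle_trans; [exact H1|]. right. apply Series_ext. intros n. rewrite !Rabs_pos_eq; auto. Qed.

Lemma sumZ_scal (v : Z -> R) c : abs_summableZ v ->
  abs_summableZ (fun n => c * v n) /\ sumZ (fun n => c * v n) = c * sumZ v.
Proof. intros E. unfold abs_summableZ, sumZ in *. split.
  - apply (ex_series_scal_l (Rabs c)) in E.
    eapply ex_series_ext; [|exact E]. intros n. simpl. change (scal (Rabs c) ?x) with (Rabs c * x).
    rewrite !Rabs_mult. ring.
  - rewrite <- Series_scal_l. apply Series_ext. intros n. ring. Qed.

Lemma term_le_sumZ (u : Z -> R) k : (forall n, 0 <= u n) -> abs_summableZ u -> u k <= sumZ u.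
Proof. intros H E. unfold abs_summableZ, sumZ in *.
  assert (E' : ex_series (fun n => u (Z.of_nat n) + u (- Z.of_nat n - 1)%Z)).
  { eapply ex_series_ext; [|exact E]. intros n. simpl. rewrite !Rabs_pos_eq; auto. }
  destruct (Z_le_gt_dec 0 k).
  - pose proof (term_le_Series _ (Z.to_nat k) (fun n => Rplus_le_le_0_compat _ _ (H _) (H _)) E').
    cbv beta in H0. rewrite Z2Nat.id in H0 by lia. pose proof (H (- k - 1)%Z). lra.
  - pose proof (term_le_Series _ (Z.to_nat (- k - 1)) (fun n => Rplus_le_le_0_compat _ _ (H _) (H _)) E').
    cbv beta in H0. rewrite Z2Nat.id in H0 by lia. replace (- (- k - 1) - 1)%Z with k in H0 by ring.
    pose proof (H (- k - 1)%Z). lra. Qed.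

Lemma sumZ_ge0 (u : Z -> R) : (forall n, 0 <= u n) -> abs_summableZ u -> 0 <= sumZ u.
Proof. intros H E. pose proof (term_le_sumZ u 0 H E). pose proof (H 0%Z). lra. Qed.

Definition w (n : Z) : R := (1/2) ^ (Z.abs_nat n).

Lemma w_pos n : 0 <= w n.
Proof. unfold w. apply pow_le. lra. Qed.
Lemma w_le1 n : w n <= 1.
Proof. unfold w. apply pow_le_one. lra. Qed.

Lemma w_summ : abs_summableZ w /\ sumZ w <= 3.
Proof. destruct (geom_series (1/2)) as [G1 G2]. lra.
  assert (Hn : forall n, w (Z.of_nat n) + w (- Z.of_nat n - 1)%Z = 3/2 * (1/2)^n).
  { intros n. unfold w. replace (Z.abs_nat (Z.of_nat n)) with n by lia.
    replace (Z.abs_nat (- Z.of_nat n - 1)) with (S n) by lia. change ((1/2)^(S n)) with (1/2 * (1/2)^n). field. }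
  unfold abs_summableZ, sumZ. split.
  - apply (ex_series_scal_l (3/2)) in G1. eapply ex_series_ext; [|exact G1].
    intros n. simpl. rewrite !Rabs_pos_eq by apply w_pos. rewrite Hn. reflexivity.
  - rewrite (Series_ext _ (fun n => 3/2 * (1/2)^n)) by exact Hn.
    rewrite (Series_scal_l (3/2) (fun n => (1/2)^n)), G2. right; field. Qed.

Lemma w_succ n : w (n + 1) <= 2 * w n.
Proof. unfold w. assert ((1/2)^(S (Z.abs_nat (n+1))) <= (1/2)^(Z.abs_nat n)) by (apply pow_decr; [lra|lia]).
  simpl in H. lra. Qed.

Lemma sqnorm_pt_eq (v : C * C) : sqnorm_pt v =
  coord 0 v ^ 2 + coord 1 v ^ 2 + coord 2 v ^ 2 + coord 3 v ^ 2.
Proof. unfold sqnorm_pt. rewrite !Cmod2_alt. simpl. ring. Qed.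

Lemma coord_le (v : C * C) i : coord i v ^ 2 <= sqnorm_pt v.
Proof. rewrite sqnorm_pt_eq.
  pose proof (pow2_ge_0 (coord 0 v)). pose proof (pow2_ge_0 (coord 1 v)).
  pose proof (pow2_ge_0 (coord 2 v)). pose proof (pow2_ge_0 (coord 3 v)).
  destruct i as [|[|[|i]]]; [lra|lra|lra|]. simpl in *. lra.
  Qed.

Lemma abs_le_sqrt c S : c ^ 2 <= S -> Rabs c <= sqrt S.
Proof. intros H. rewrite <- (sqrt_pow2 (Rabs c)) by apply Rabs_pos.
  apply sqrt_le_1_alt. rewrite pow2_abs. lra. Qed.

Lemma op_bound (K : Z -> Z -> R) B : 0 <= B ->
  (forall k m, Rabs (K k m) <= B * w k * w m) -> opnorm_le K (11 * B).
Proof. intros HB HK r Hr.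
  set (S := sumZ (fun n => sqnorm_pt (r n))).
  set (N := l2norm r).
  assert (Hsq : forall n, 0 <= sqnorm_pt (r n)).
  { intros n. unfold sqnorm_pt. pose proof (pow2_ge_0 (Cmod (fst (r n)))). pose proof (pow2_ge_0 (Cmod (snd (r n)))). lra. }
  assert (HN0 : 0 <= N) by apply sqrt_pos.
  assert (Hc : forall m i, Rabs (coord i (r m)) <= N).
  { intros m i. apply abs_le_sqrt. eapply Rle_trans. apply coord_le.
    apply (term_le_sumZ (fun n => sqnorm_pt (r n))); auto. }
  destruct w_summ as [Wa Ws].
  assert (Hrow : forall k i, abs_summableZ (fun m => K k m * coord i (r m)) /\
                 Rabs (sumZ (fun m => K k m * coord i (r m))) <= 3 * B * N * w k).
  { intros k i. destruct (sumZ_scal w (B * w k * N) Wa) as [Sa Se].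
    destruct (sumZ_cmp (fun m => K k m * coord i (r m)) (fun n => B * w k * N * w n)) as [A1 A2]; auto.
    - intros m. rewrite Rabs_mult. pose proof (HK k m). pose proof (Hc m i).
      pose proof (w_pos k). pose proof (w_pos m). pose proof (Rabs_pos (K k m)).
      pose proof (Rabs_pos (coord i (r m))).
      assert (0 <= B * w k * w m) by (repeat apply Rmult_le_pos; auto).
      apply Rle_trans with ((B * w k * w m) * N). apply Rmult_le_compat; auto.
      right; ring.
    - split; auto. rewrite Se in A2. pose proof (w_pos k).
      assert (0 <= B * w k * N) by (repeat apply Rmult_le_pos; auto).
      assert (B * w k * N * sumZ w <= B * w k * N * 3) by (apply Rmult_le_compat_l; auto).
      lra. }
  split. { intros k i _. apply Hrow. }
  set (M := 36 * B^2 * N^2).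
  assert (HM : 0 <= M) by (unfold M; pose proof (pow2_ge_0 B); pose proof (pow2_ge_0 N); nra).
  assert (Hpt : forall k, Rabs (sqnorm_pt (applyK K r k)) <= M * w k).
  { intros k. assert (Hp : 0 <= sqnorm_pt (applyK K r k)).
    { rewrite sqnorm_pt_eq. pose proof (pow2_ge_0 (coord 0 (applyK K r k))). pose proof (pow2_ge_0 (coord 1 (applyK K r k))).
      pose proof (pow2_ge_0 (coord 2 (applyK K r k))). pose proof (pow2_ge_0 (coord 3 (applyK K r k))). lra. }
    rewrite Rabs_pos_eq by exact Hp. rewrite sqnorm_pt_eq. unfold applyK. simpl coord.
    pose proof (w_pos k). pose proof (w_le1 k).
    assert (Hb : forall i, (sumZ (fun m => K k m * coord i (r m)))^2 <= 9 * B^2 * N^2 * w k).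
    { intros i. destruct (Hrow k i) as [_ Hi].
      set (s := sumZ (fun m => K k m * coord i (r m))) in *.
      assert (s^2 <= (3 * B * N * w k)^2).
      { rewrite <- (pow2_abs s). apply pow_incr. split. apply Rabs_pos. exact Hi. }
      assert (0 <= 9 * B^2 * N^2) by (pose proof (pow2_ge_0 B); pose proof (pow2_ge_0 N); nra).
      assert (9 * B^2 * N^2 * (w k * w k) <= 9 * B^2 * N^2 * w k).
      { apply Rmult_le_compat_l; auto. nra. }
      nra. }
    pose proof (Hb 0%nat). pose proof (Hb 1%nat). pose proof (Hb 2%nat). pose proof (Hb 3%nat).
    simpl coord in H1, H2, H3, H4. unfold M. lra. }
  destruct (sumZ_scal w M Wa) as [Ma Me].
  destruct (sumZ_cmp (fun k => sqnorm_pt (applyK K r k)) (fun n => M * w n) Hpt Ma) as [L1 L2].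
  split. exact L1.
  unfold l2norm. fold N.
  rewrite Me in L2.
  assert (M * sumZ w <= M * 3) by (apply Rmult_le_compat_l; auto).
  assert (H11 : sumZ (fun n => sqnorm_pt (applyK K r n)) <= (11 * B * N)^2).
  { pose proof (Rle_abs (sumZ (fun n => sqnorm_pt (applyK K r n)))). unfold M in *.
    pose proof (pow2_ge_0 B); pose proof (pow2_ge_0 N).
    assert (0 <= B^2 * N^2) by nra. nra. }
  apply sqrt_le_1_alt in H11. rewrite sqrt_pow2 in H11.
  lra. repeat apply Rmult_le_pos; lra. Qed.

Lemma Q0partial_S sigma t N : Q0partial sigma t (S N) = Q0partial sigma t N * (1 - sigma (- Z.of_nat (S N) - t - 1)%Z).
Proof. reflexivity. Qed.

Lemma factor_lt1 (sigma : Z -> R) (t : Z) :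
  (forall n : Z, 0 <= sigma n <= 1) ->
  Rbar_lt (Finite 0) (Lim_seq (Q0partial sigma t)) ->
  forall i : nat, (1 <= i)%nat -> sigma (- Z.of_nat i - t - 1)%Z < 1.
Proof. intros Hs HQ i Hi. destruct (Rlt_dec (sigma (- Z.of_nat i - t - 1)%Z) 1) as [|Hn]; auto.
  exfalso. assert (He : sigma (- Z.of_nat i - t - 1)%Z = 1) by (pose proof (Hs (- Z.of_nat i - t - 1)%Z); lra).
  assert (Hz : forall d, Q0partial sigma t (i + d) = 0).
  { induction d.
    - destruct i as [|i']; [lia|]. rewrite Nat.add_0_r. rewrite Q0partial_S, He. ring.
    - rewrite Nat.add_succ_r, Q0partial_S, IHd. ring. }
  rewrite (Lim_seq_ext_loc _ (fun _ => 0)) in HQ.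
  - rewrite Lim_seq_const in HQ. simpl in HQ. lra.
  - exists i. intros n Hn2. replace n with (i + (n - i))%nat by lia. apply Hz. Qed.

Lemma tail_small (sigma : Z -> R) :
  ex_series (fun m : nat => sigma (- Z.of_nat m - 1)%Z) ->
  exists N0 : nat, forall m, (N0 <= m)%nat -> sigma (- Z.of_nat m - 1)%Z < 1/2.
Proof. intros E. apply ex_series_lim_0 in E. apply is_lim_seq_spec in E.
  assert (Hp : 0 < 1/2) by lra. destruct (E (mkposreal _ Hp)) as [N0 HN].
  exists N0. intros m Hm. specialize (HN m Hm). simpl in HN.
  rewrite Rminus_0_r in HN. pose proof (Rle_abs (sigma (- Z.of_nat m - 1)%Z)). lra. Qed.

Lemma finite_eta (sigma : Z -> R) (t : Z) :
  (forall i : nat, (1 <= i)%nat -> sigma (- Z.of_nat i - t - 1)%Z < 1) ->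
  forall Kn : nat, exists eta, 0 < eta /\ forall i : nat, (1 <= i <= Kn)%nat ->
     sigma (- Z.of_nat i - t - 1)%Z <= 1 - eta.
Proof. intros H Kn. induction Kn.
  - exists 1. split. lra. intros i Hi. lia.
  - destruct IHKn as [eta [He Hi]].
    assert (H1 := H (S Kn) ltac:(lia)).
    exists (Rmin eta (1 - sigma (- Z.of_nat (S Kn) - t - 1)%Z)). split.
    + apply Rmin_glb_lt; lra.
    + intros i Hi'. destruct (Nat.eq_dec i (S Kn)) as [->|Hne].
      * pose proof (Rmin_r eta (1 - sigma (- Z.of_nat (S Kn) - t - 1)%Z)). lra.
      * pose proof (Rmin_l eta (1 - sigma (- Z.of_nat (S Kn) - t - 1)%Z)).
        pose proof (Hi i ltac:(lia)). lra. Qed.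

Lemma eta_exists (sigma : Z -> R) (t : Z) :
  (forall n : Z, 0 <= sigma n <= 1) ->
  ex_series (fun m : nat => sigma (- Z.of_nat m - 1)%Z) ->
  Rbar_lt (Finite 0) (Lim_seq (Q0partial sigma t)) ->
  exists eta, 0 < eta <= 1/2 /\ forall n : Z, (n <= - t - 2)%Z -> sigma n <= 1 - eta.
Proof. intros Hs E HQ.
  destruct (tail_small sigma E) as [N0 HN0].
  set (Kn := Z.to_nat (Z.of_nat N0 + Z.abs t)).
  destruct (finite_eta sigma t (factor_lt1 sigma t Hs HQ) Kn) as [eta [He Hi]].
  exists (Rmin eta (1/2)). split. split. apply Rmin_glb_lt; lra. apply Rmin_r.
  intros n Hn. pose proof (Rmin_l eta (1/2)). pose proof (Rmin_r eta (1/2)).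
  set (i := Z.to_nat (- n - t - 1)).
  destruct (le_lt_dec i Kn) as [Hle|Hgt].
  - assert (Hi' := Hi i ltac:(unfold i; lia)).
    replace (- Z.of_nat i - t - 1)%Z with n in Hi' by (unfold i; lia). lra.
  - assert (Hm := HN0 (Z.to_nat (- n - 1)) ltac:(unfold i, Kn in *; lia)).
    replace (- Z.of_nat (Z.to_nat (- n - 1)) - 1)%Z with n in Hm by lia. lra. Qed.

Lemma num1 x eta : 0 < eta <= 1/2 -> 0 <= x <= eta/16 ->
  (1 - eta) * (/ (1 - x)^2 * ((1 + x) / (1 - x))) <= 1 - eta/2.
Proof. intros He Hx. set (y := / (1 - x)).
  assert (Hy : y * (1 - x) = 1) by (unfold y; field; lra).
  assert (Hy0 : 0 < y) by (unfold y; apply Rinv_0_lt_compat; lra).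
  replace (/ (1 - x)^2 * ((1 + x) / (1 - x))) with ((1 + x) * y^3) by (unfold y; field; lra).
  assert (P : (1 - eta) * (1 + x) <= (1 - eta/2) * (1 - x)^3).
  { assert (0 <= 3*x^2 - x^3) by nra. nra. }
  assert (Hy3 : 0 <= y^3) by (apply pow_le; lra).
  assert ((1 - eta) * (1 + x) * y^3 <= (1 - eta/2) * (1 - x)^3 * y^3) by (apply Rmult_le_compat_r; auto).
  replace ((1 - eta/2) * (1 - x)^3 * y^3) with ((1 - eta/2) * (y * (1-x))^3) in H by ring.
  rewrite Hy in H. lra. Qed.

Lemma num2 x : 0 <= x <= 1/32 -> / (1 - x)^2 * (x / (1 - x)) <= 1/2.
Proof. intros Hx. set (y := / (1 - x)).
  assert (Hy : y * (1 - x) = 1) by (unfold y; field; lra).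
  assert (Hy0 : 0 < y) by (unfold y; apply Rinv_0_lt_compat; lra).
  replace (/ (1 - x)^2 * (x / (1 - x))) with (x * y^3) by (unfold y; field; lra).
  assert (y <= 32/31) by nra.
  assert (y^3 <= (32/31)^3) by (apply pow_incr; lra).
  assert (0 <= y^3) by (apply pow_le; lra). nra. Qed.

Lemma prod4 a b c d A B C D : 0 <= a <= A -> 0 <= b <= B -> 0 <= c <= C -> 0 <= d <= D ->
  a * b * c * d <= A * B * C * D.
Proof. intros. apply Rmult_le_compat; try apply Rmult_le_compat; try apply Rmult_le_compat;
  try apply Rmult_le_pos; try apply Rmult_le_pos; lra. Qed.

Lemma J_w n L : 0 <= L <= 1/2 -> Rabs (BesselJ n (2*L)) <= 2 * w n.
Proof. intros HL. eapply Rle_trans. apply bessel_bound; auto.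
  unfold w. assert (L ^ Z.abs_nat n <= (1/2)^Z.abs_nat n) by (apply pow_incr; lra).
  assert (0 <= L ^ Z.abs_nat n) by (apply pow_le; lra).
  assert (/ (1 - L^2) <= 2).
  { assert (/(1-L^2) <= /(1/2)) by (apply Rinv_le_contravar; nra). 
    replace (/(1/2)) with 2 in H1 by field. lra. }
  unfold Rdiv. assert (0 <= / (1 - L^2)) by (apply Rlt_le, Rinv_0_lt_compat; nra).
  assert (L ^ Z.abs_nat n * / (1 - L ^ 2) <= L ^ Z.abs_nat n * 2) by (apply Rmult_le_compat_l; auto).
  lra. Qed.

Lemma IZR_abs_ge1 z : z <> 0%Z -> 1 <= Rabs (IZR z).
Proof. intros Hz. rewrite Rabs_Zabs. apply IZR_le. lia. Qed.

Theorem proposition5p1 (sigma : Z -> R) (t : Z) :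
  (forall n : Z, 0 <= sigma n <= 1) ->
  ex_series (fun m : nat => sigma (- Z.of_nat m - 1)%Z) ->
  Rbar_lt (Finite 0) (Lim_seq (Q0partial sigma t)) ->
  exists Lstar c : R, 0 < Lstar /\ 0 < c /\
    forall L : R, 0 <= L < Lstar -> opnorm_le (Dker sigma t L) (c * L).
Proof. intros Hs E HQ.
  destruct (eta_exists sigma t Hs E HQ) as [eta [He Heta]].
  exists (eta / 16), (11 * (32 / eta)). split. lra. split.
  { assert (0 < 32 / eta) by (apply Rdiv_lt_0_compat; lra). lra. }
  intros L HL.
  assert (HL2 : 0 <= L <= 1/2) by lra.
  assert (Hx : 0 <= L^2 <= eta/16) by nra.
  assert (Hden : forall m, eta / 2 <= 1 - Ms sigma t L m).
  { intros m. unfold Ms, sig_shift. pose proof (Hs (m - t - 1)%Z) as Hsm.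
    destruct (Z_le_gt_dec 0 m) as [Hm | Hm].
    - pose proof (KBe_bound_pos L m HL2 Hm). pose proof (num2 (L^2) ltac:(lra)).
      destruct (Rle_dec 0 (KBe L m)).
      + assert (sigma (m - t - 1)%Z * KBe L m <= 1 * KBe L m) by (apply Rmult_le_compat_r; lra). lra.
      + assert (sigma (m - t - 1)%Z * KBe L m <= 0). { apply Rmult_le_0_l; lra. } lra.
    - pose proof (KBe_bound_all L m HL2). pose proof (num1 (L^2) eta He Hx).
      pose proof (Heta (m - t - 1)%Z ltac:(lia)).
      set (kap := / (1 - L ^ 2) ^ 2 * ((1 + L ^ 2) / (1 - L ^ 2))) in *.
      assert (0 <= kap).
      { unfold kap. apply Rmult_le_pos. apply Rlt_le, Rinv_0_lt_compat, pow_lt. nra.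
        apply Rdiv_le_0_compat; nra. }
      assert (sigma (m - t - 1)%Z * KBe L m <= sigma (m - t - 1)%Z * kap) by (apply Rmult_le_compat_l; lra).
      assert (sigma (m - t - 1)%Z * kap <= (1 - eta) * kap) by (apply Rmult_le_compat_r; lra).
      lra. }
  assert (HK : forall k m, Rabs (Dker sigma t L k m) <= (32 / eta * L) * w k * w m).
  { intros k m. pose proof (w_pos k). pose proof (w_pos m).
    assert (0 <= 32 / eta * L) by (apply Rmult_le_pos; [apply Rlt_le, Rdiv_lt_0_compat|]; lra).
    unfold Dker. destruct (Z.eqb k m) eqn:Ekm.
    { rewrite Rabs_R0. apply Rmult_le_pos; [apply Rmult_le_pos|]; auto. }
    apply Z.eqb_neq in Ekm.
    unfold Rdiv. rewrite Rabs_mult.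
    assert (Hd : Rabs (/ IZR (k - m)) <= 1).
    { rewrite Rabs_inv. pose proof (IZR_abs_ge1 (k - m) ltac:(lia)).
      assert (Hq : / Rabs (IZR (k - m)) <= / 1) by (apply Rinv_le_contravar; lra). rewrite Rinv_1 in Hq. lra. }
    unfold ghat, fhat. simpl fst. simpl snd.
    set (g := / (1 - Ms sigma t L m)).
    assert (Hg : 0 <= g <= 2 / eta).
    { pose proof (Hden m). unfold g. split. apply Rlt_le, Rinv_0_lt_compat; lra.
      replace (2 / eta) with (/ (eta / 2)) by (field; lra). apply Rinv_le_contravar; lra. }
    set (s := sig_shift sigma t k).
    assert (Hs' : 0 <= s <= 1) by apply Hs.
    pose proof (J_w (m + 1) L HL2) as Ja. pose proof (J_w k L HL2) as Jb.
    pose proof (J_w m L HL2) as Jc. pose proof (J_w (k + 1) L HL2) as Jd.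
    pose proof (w_succ m). pose proof (w_succ k).
    set (a := BesselJ (m + 1) (2 * L)) in *. set (b := BesselJ k (2 * L)) in *.
    set (c := BesselJ m (2 * L)) in *. set (d := BesselJ (k + 1) (2 * L)) in *.
    assert (T1 : Rabs (g * (L * a) * (s * b)) <= (2/eta) * L * (4 * w m) * (2 * w k)).
    { replace (g * (L * a) * (s * b)) with (g * L * a * (s * b)) by ring.
      rewrite !Rabs_mult. rewrite (Rabs_pos_eq g), (Rabs_pos_eq L), (Rabs_pos_eq s) by lra.
      apply prod4; split; try apply Rabs_pos; try lra.
      apply Rmult_le_pos; [lra|apply Rabs_pos].
      assert (s * Rabs b <= 1 * Rabs b) by (apply Rmult_le_compat_r; [apply Rabs_pos|lra]). lra. }
    assert (T2 : Rabs (g * - c * (s * (L * d))) <= (2/eta) * (2 * w m) * L * (4 * w k)).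
    { replace (g * - c * (s * (L * d))) with (g * (- c) * L * (s * d)) by ring.
      rewrite !Rabs_mult, Rabs_Ropp. rewrite (Rabs_pos_eq g), (Rabs_pos_eq L), (Rabs_pos_eq s) by lra.
      apply prod4; split; try apply Rabs_pos; try lra.
      apply Rmult_le_pos; [lra|apply Rabs_pos].
      assert (s * Rabs d <= 1 * Rabs d) by (apply Rmult_le_compat_r; [apply Rabs_pos|lra]). lra. }
    pose proof (Rabs_triang (g * (L * a) * (s * b)) (g * - c * (s * (L * d)))).
    set (num := g * (L * a) * (s * b) + g * - c * (s * (L * d))) in *.
    assert (Rabs num <= 32 / eta * L * w k * w m).
    { replace (32 / eta * L * w k * w m) with ((2/eta) * L * (4 * w m) * (2 * w k) + (2/eta) * (2 * w m) * L * (4 * w k))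
        by (field; lra). lra. }
    assert (Rabs num * Rabs (/ IZR (k - m)) <= Rabs num * 1) by (apply Rmult_le_compat_l; [apply Rabs_pos|lra]).
    lra. }
  replace (11 * (32 / eta) * L) with (11 * (32 / eta * L)) by ring.
  apply op_bound; auto. apply Rmult_le_pos; [apply Rlt_le, Rdiv_lt_0_compat|]; lra. Qed.
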